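(* Let $0<\alpha,\beta<\tfrac12$ and $g\in C_b^1(M)$. The map $h_g$ is well defined on $A$, injective, and $h_g(A)=A_g$, with inverse $h_g^{-1}:A_g\to A$ given by $h_g^{-1}(x,y,z,w)=\big(x,y,z,w-\sum_{i\ge0}\beta^i g(B_\alpha^{-i-1}(x,y))\big)$; moreover $B(v)=h_g^{-1}(B_g(h_g(v)))$ for $v\in A$. Furthermore: (i) if $\alpha>\beta$, $h_g$ is bi-Lipschitz; (ii) if $\alpha=\beta$, $h_g$ and $h_g^{-1}$ are Hölder continuous for every Hölder exponent $\rho<1$; (iii) if $\alpha<\beta$, $h_g$ is Hölder continuous with Hölder exponent $\rho=\frac{\log\beta}{\log\alpha}$.
   Context: $M=[0,1)\times\mathbb R$. $B_\alpha(x,y)=(2x,\alpha y)$ if $0\le x<\tfrac12$ and $(2x-1,\alpha y+1-\alpha)$ if $\tfrac12\le x<1$; likewise $B_\beta$. $C_b^1(M)$: $C^1$ functions on the interior of $M$ with bounded function and derivative, extended continuously to the closure (they are Lipschitz). $B_g(x,y,z,w)=(B_\alpha(x,y),B_\beta(z,w)+(0,g(x,y)))$ on $M\times M$, and $B=B_0$. $A_\alpha\subset[0,1]$ is the Cantor set with $A_\alpha=\alpha A_\alpha\cup(\alpha A_\alpha+1-\alpha)$ (similarly $A_\beta$), $A=[0,1)\times A_\alpha\times[0,1)\times A_\beta$. On $[0,1)\times A_\alpha$, $B_\alpha^{-1}(x,y)=(x/2,y/\alpha)$ if $y\le\tfrac12$ and $((x+1)/2,(y-(1-\alpha))/\alpha)$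 if $y>\tfrac12$. $h_g(x,y,z,w)=\big(x,y,z,w+\sum_{i\ge0}\beta^i g(B_\alpha^{-i-1}(x,y))\big)$. For $\delta>0$ let $V=[0,1)\times[-\delta,1+\delta]\times[0,1)\times[-\delta-\frac{\|g\|_\infty}{1-\beta},1+\delta+\frac{\|g\|_\infty}{1-\beta}]$ (so $B_g(V)\subset V$), and the attractor of $B_g$ is $A_g=\bigcap_{n\in\mathbb N}B_g^n(V)$. Continuity properties refer to the Euclidean metric on $A$ and $A_g$. *)

(* Defs.v *)
From Stdlib Require Import Reals.
From Coquelicot Require Import Coquelicot.
Open Scope R_scope.

Definition pt4 := (R * R * R * R)%type.

Definition Bmap (a : R) (p : R * R) : R * R :=
  let '(x, y) := p in
  if Rlt_dec x (1/2) then (2 * x, a * y) else (2 * x - 1, a * y + 1 - a).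

Definition Bg (a b : R) (g : R -> R -> R) (p : pt4) : pt4 :=
  let '(x, y, z, w) := p in
  let '(x', y') := Bmap a (x, y) in
  let '(z', w') := Bmap b (z, w) in
  (x', y', z', w' + g x y).

Definition B0 (a b : R) : pt4 -> pt4 := Bg a b (fun _ _ => 0).

(* The Cantor set A_alpha: the attractor of the IFS {t -> a t, t -> a t + 1 - a},
   i.e. the intersection of the iterates of [0,1]. *)
Fixpoint cantor_approx (a : R) (n : nat) (t : R) : Prop :=
  match n with
  | O => 0 <= t <= 1
  | S n => exists s, cantor_approx a n s /\ (t = a * s \/ t = a * s + 1 - a)
  end.
Definition Cantor (a : R) (t : R) : Prop := forall n, cantor_approx a n t.

Definition Aset (a b : R) (p : pt4) : Prop :=
  let '(x, y, z, w) := p in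
  0 <= x < 1 /\ Cantor a y /\ 0 <= z < 1 /\ Cantor b w.

(* B_alpha^{-1} on [0,1) x A_alpha *)
Definition Binv (a : R) (p : R * R) : R * R :=
  let '(x, y) := p in
  if Rle_dec y (1/2) then (x / 2, y / a) else ((x + 1) / 2, (y - (1 - a)) / a).

Definition hterm (a b : R) (g : R -> R -> R) (x y : R) (i : nat) : R :=
  let q := Nat.iter (S i) (Binv a) (x, y) in b ^ i * g (fst q) (snd q).

Definition hg (a b : R) (g : R -> R -> R) (p : pt4) : pt4 :=
  let '(x, y, z, w) := p in (x, y, z, w + Series (hterm a b g x y)).

Definition hg_inv (a b : R) (g : R -> R -> R) (p : pt4) : pt4 :=
  let '(x, y, z, w) := p in (x, y, z, w - Series (hterm a b g x y)).

Definition bounded_by (g : R -> R -> R) (K : R) : Prop :=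
  forall x y, 0 <= x < 1 -> Rabs (g x y) <= K.

Definition Cb1 (g : R -> R -> R) : Prop :=
  (exists K, bounded_by g K) /\
  (exists gx gy : R -> R -> R,
      (forall x y, 0 < x < 1 ->
         differentiable_pt_lim g x y (gx x y) (gy x y) /\
         continuity_2d_pt gx x y /\ continuity_2d_pt gy x y) /\
      (exists K', forall x y, 0 < x < 1 ->
         sqrt (gx x y ^ 2 + gy x y ^ 2) <= K')) /\
  (forall x y, 0 <= x < 1 -> forall eps, 0 < eps -> exists delta, 0 < delta /\
     forall x' y', 0 <= x' < 1 -> Rabs (x' - x) < delta -> Rabs (y' - y) < delta ->
       Rabs (g x' y' - g x y) < eps).

(* The absorbing region V (depends on delta and a sup-norm bound ||g||_oo). *)
Definition Vset (b delta gnorm : R) (p : pt4) : Prop :=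
  let '(x, y, z, w) := p in
  let c := gnorm / (1 - b) in
  0 <= x < 1 /\ - delta <= y <= 1 + delta /\ 0 <= z < 1 /\
  - delta - c <= w <= 1 + delta + c.

Definition iter_image (f : pt4 -> pt4) (S : pt4 -> Prop) (n : nat) (q : pt4) : Prop :=
  exists p, S p /\ Nat.iter n f p = q.

Definition Ag (a b : R) (g : R -> R -> R) (delta gnorm : R) (q : pt4) : Prop :=
  forall n, iter_image (Bg a b g) (Vset b delta gnorm) n q.

Definition dist4 (p q : pt4) : R :=
  let '(x, y, z, w) := p in
  let '(x', y', z', w') := q in
  sqrt ((x - x') ^ 2 + (y - y') ^ 2 + (z - z') ^ 2 + (w - w') ^ 2).

(* d^rho with the convention 0^rho = 0 (rho > 0) *)
Definition rpow (d rho : R) : R := if Req_EM_T d 0 then 0 else Rpower d rho.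

Definition Holder_on (S : pt4 -> Prop) (f : pt4 -> pt4) (rho : R) : Prop :=
  exists C, 0 <= C /\ forall p q, S p -> S q -> dist4 (f p) (f q) <= C * rpow (dist4 p q) rho.

Definition BiLipschitz_on (S : pt4 -> Prop) (f : pt4 -> pt4) : Prop :=
  exists L, 0 < L /\ forall p q, S p -> S q ->
    dist4 p q / L <= dist4 (f p) (f q) <= L * dist4 p q.

(* Main.v *)
Require Import Defs.
From Stdlib Require Import Reals Lra Lia.
From Coquelicot Require Import Coquelicot.
Open Scope R_scope.


Fixpoint capprox (a lo hi : R) (n : nat) (t : R) : Prop :=
  match n with
  | O => lo <= t <= hi
  | S n => exists s, capprox a lo hi n s /\ (t = a * s \/ t = a * s + 1 - a)
  end.

Lemma pow_le1 x n : 0 <= x <= 1 -> x ^ n <= 1.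
Proof. intros H; induction n; simpl; [lra|]. assert (0 <= x ^ n) by (apply pow_le; lra). nra. Qed.

Lemma approx_cap a n t : cantor_approx a n t <-> capprox a 0 1 n t.
Proof.
  revert t; induction n as [|n IH]; intro t; simpl; [tauto|].
  split; intros [s [H1 H2]]; exists s; split; auto; apply IH; auto.
Qed.

Lemma cap_mono a lo hi lo' hi' n t : lo' <= lo -> hi <= hi' ->
  capprox a lo hi n t -> capprox a lo' hi' n t.
Proof.
  intros H1 H2; revert t; induction n as [|n IH]; intro t; simpl.
  - lra.
  - intros [s [Hs Ht]]; exists s; auto.
Qed.

Lemma cap_bound a D n t : 0 < a < 1 -> 0 <= D ->
  capprox a (-D) (1 + D) n t -> - D * a ^ n <= t <= 1 + D * a ^ n.
Proof.
  intros Ha HD; revert t; induction n as [|n IH]; intro t; simpl.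
  - lra.
  - intros [s [Hs Ht]]. specialize (IH s Hs).
    assert (0 <= D * a ^ n) by (apply Rmult_le_pos; [lra| apply pow_le; lra]).
    destruct Ht as [-> | ->]; split; nra.
Qed.

Lemma cap_shift a lo hi lo' hi' m n t :
  (forall s, capprox a lo hi m s -> lo' <= s <= hi') ->
  capprox a lo hi (n + m) t -> capprox a lo' hi' n t.
Proof.
  intros Hm; revert t; induction n as [|n IH]; intro t; simpl.
  - apply Hm.
  - intros [s [Hs Ht]]; exists s; auto.
Qed.

Lemma cap_limit a n t : 0 < a < 1/2 ->
  (forall e, 0 < e -> capprox a (-e) (1 + e) n t) -> cantor_approx a n t.
Proof.
  intros Ha; revert t; induction n as [|n IH]; intros t H; simpl.
  - split.
    + destruct (Rle_or_lt 0 t); auto. specialize (H (-t/2) ltac:(lra)). simpl in H; lra.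
    + destruct (Rle_or_lt t 1); auto. specialize (H ((t-1)/2) ltac:(lra)). simpl in H; lra.
  - set (e0 := (1/2 - a) / (2 * a)).
    assert (He0 : 0 < e0) by (unfold e0; apply Rdiv_lt_0_compat; lra).
    assert (Hae0 : a * e0 = (1/2 - a)/2) by (unfold e0; field; lra).
    assert (Hb : forall e s, 0 < e -> capprox a (-e) (1+e) n s -> -e <= s <= 1 + e).
    { intros e s He Hs. apply cap_bound in Hs; [|lra|lra].
      assert (a ^ n <= 1) by (apply pow_le1; lra).
      assert (0 <= a ^ n) by (apply pow_le; lra). nra. }
    destruct (Rle_or_lt t (1/2)) as [Hl|Hr].
    + exists (t / a); split.
      * apply IH. intros e He.
        set (e' := Rmin e e0).
        assert (He' : 0 < e') by (unfold e'; apply Rmin_pos; lra).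
        assert (e' <= e) by apply Rmin_l. assert (e' <= e0) by apply Rmin_r.
        destruct (H e' He') as [s [Hs Ht]].
        pose proof (Hb e' s He' Hs).
        destruct Ht as [Ht|Ht].
        -- replace (t / a) with s by (subst t; field; lra).
           apply (cap_mono a (-e') (1+e')); auto; lra.
        -- exfalso. subst t. nra.
      * left; field; lra.
    + exists ((t - (1 - a)) / a); split.
      * apply IH. intros e He.
        set (e' := Rmin e e0).
        assert (He' : 0 < e') by (unfold e'; apply Rmin_pos; lra).
        assert (e' <= e) by apply Rmin_l. assert (e' <= e0) by apply Rmin_r.
        destruct (H e' He') as [s [Hs Ht]].
        pose proof (Hb e' s He' Hs).
        destruct Ht as [Ht|Ht].
        -- exfalso. subst t. nra.
        -- replace ((t - (1 - a)) / a) with s by (subst t; field; lra).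
           apply (cap_mono a (-e') (1+e')); auto; lra.
      * right; field; lra.
Qed.

Lemma cantor_of_caps a D t : 0 < a < 1/2 -> 0 <= D ->
  (forall n, capprox a (-D) (1 + D) n t) -> Cantor a t.
Proof.
  intros Ha HD H n. apply cap_limit; auto. intros e He.
  destruct (pow_lt_1_zero a ltac:(rewrite Rabs_pos_eq; lra) (e / (D + 1)))
    as [m Hm]; [apply Rdiv_lt_0_compat; lra|].
  specialize (Hm m (le_n m)). rewrite Rabs_pos_eq in Hm by (apply pow_le; lra).
  assert (Hm' : D * a ^ m <= e).
  { apply Rlt_le. apply (Rmult_lt_compat_r (D+1)) in Hm; [|lra].
    replace (e / (D + 1) * (D + 1)) with e in Hm by (field; lra).
    assert (0 <= a ^ m) by (apply pow_le; lra). nra. }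
  apply (cap_shift a (-D) (1+D) (-e) (1+e) m n t); [|apply H].
  intros s Hs. apply cap_bound in Hs; [|lra|lra]. lra.
Qed.

Lemma approx_bound a n t : 0 < a < 1 -> cantor_approx a n t -> 0 <= t <= 1.
Proof.
  intros Ha H. apply approx_cap in H.
  apply (cap_mono a 0 1 (-0) (1+0)) in H; [|lra|lra].
  apply (cap_bound a 0) in H; [|lra|lra]. lra.
Qed.

Lemma cantor_bound a t : 0 < a < 1 -> Cantor a t -> 0 <= t <= 1.
Proof. intros Ha H. exact (H O). Qed.

Lemma cantor_left a t : 0 < a < 1/2 -> Cantor a t -> t <= 1/2 ->
  Cantor a (t / a) /\ t <= a.
Proof.
  intros Ha H Ht.
  assert (K : forall n, exists s, cantor_approx a n s /\ t = a * s).
  { intro n. destruct (H (S n)) as [s [Hs [E|E]]].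
    - exists s; auto.
    - apply approx_bound in Hs; [|lra]. exfalso; subst t; nra. }
  split.
  - intro n. destruct (K n) as [s [Hs E]].
    replace (t / a) with s by (subst t; field; lra). auto.
  - destruct (K O) as [s [Hs E]]. simpl in Hs. nra.
Qed.

Lemma cantor_right a t : 0 < a < 1/2 -> Cantor a t -> 1/2 < t ->
  Cantor a ((t - (1 - a)) / a) /\ 1 - a <= t.
Proof.
  intros Ha H Ht.
  assert (K : forall n, exists s, cantor_approx a n s /\ t = a * s + 1 - a).
  { intro n. destruct (H (S n)) as [s [Hs [E|E]]].
    - apply approx_bound in Hs; [|lra]. exfalso; subst t; nra.
    - exists s; auto. }
  split.
  - intro n. destruct (K n) as [s [Hs E]].
    replace ((t - (1 - a)) / a) with s by (subst t; field; lra). auto.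
  - destruct (K O) as [s [Hs E]]. simpl in Hs. nra.
Qed.

Lemma cantor_fwd a t : 0 < a < 1 -> Cantor a t ->
  Cantor a (a * t) /\ Cantor a (a * t + 1 - a).
Proof.
  intros Ha H. pose proof (cantor_bound a t Ha H).
  split; intros [|n]; simpl.
  - split; nra.
  - exists t; auto.
  - split; nra.
  - exists t; auto.
Qed.

Lemma binv_fst a x y : 0 <= x < 1 -> 0 <= fst (Binv a (x, y)) < 1.
Proof. intros H; unfold Binv; destruct (Rle_dec y (1/2)); simpl; lra. Qed.

Lemma iter_binv_fst a n p : 0 <= fst p < 1 -> 0 <= fst (Nat.iter n (Binv a) p) < 1.
Proof.
  induction n; simpl; auto. intro H. specialize (IHn H).
  destruct (Nat.iter n (Binv a) p) as [x y]. apply binv_fst; auto.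
Qed.

Definition PC a (p : R * R) := 0 <= fst p < 1 /\ Cantor a (snd p).

Lemma binv_PC a p : 0 < a < 1/2 -> PC a p -> PC a (Binv a p).
Proof.
  intros Ha; destruct p as [x y]; intros [Hx Hy]; simpl in *.
  split; [apply binv_fst; auto|].
  unfold Binv; destruct (Rle_dec y (1/2)); simpl.
  - apply cantor_left; auto.
  - apply cantor_right; auto; lra.
Qed.

Lemma iter_binv_PC a n p : 0 < a < 1/2 -> PC a p -> PC a (Nat.iter n (Binv a) p).
Proof. intros Ha H; induction n; simpl; auto. apply binv_PC; auto. Qed.

Lemma bmap_binv a x y : 0 < a -> 0 <= x < 1 -> Bmap a (Binv a (x, y)) = (x, y).
Proof.
  intros Ha Hx. unfold Binv; destruct (Rle_dec y (1/2)); unfold Bmap.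
  - destruct (Rlt_dec (x/2) (1/2)); [|lra]. f_equal; field; lra.
  - destruct (Rlt_dec ((x+1)/2) (1/2)); [lra|]. f_equal; field; lra.
Qed.

Lemma binv_bmap a x y : 0 < a -> a * y <= 1/2 -> 1/2 < a * y + 1 - a ->
  Binv a (Bmap a (x, y)) = (x, y).
Proof.
  intros Ha H1 H2. unfold Bmap; destruct (Rlt_dec x (1/2)); unfold Binv.
  - destruct (Rle_dec (a*y) (1/2)); [|lra]. f_equal; field; lra.
  - destruct (Rle_dec (a * y + 1 - a) (1/2)); [lra|]. f_equal; field; lra.
Qed.

Lemma bmap_fst a x y : 0 <= x < 1 -> 0 <= fst (Bmap a (x, y)) < 1.
Proof. intros H; unfold Bmap; destruct (Rlt_dec x (1/2)); simpl; lra. Qed.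

Lemma bmap_snd a x y : snd (Bmap a (x, y)) = a * y \/ snd (Bmap a (x, y)) = a * y + 1 - a.
Proof. unfold Bmap; destruct (Rlt_dec x (1/2)); simpl; auto. Qed.

Lemma bounded_nonneg g K : bounded_by g K -> 0 <= K.
Proof. intros H. specialize (H 0 0 ltac:(lra)). pose proof (Rabs_pos (g 0 0)). lra. Qed.

Lemma hterm_bound a b g K x y i : 0 <= b -> bounded_by g K -> 0 <= x < 1 ->
  Rabs (hterm a b g x y i) <= K * b ^ i.
Proof.
  intros Hb HK Hx. unfold hterm. rewrite Rabs_mult, Rabs_pos_eq by (apply pow_le; lra).
  rewrite Rmult_comm. apply Rmult_le_compat_r; [apply pow_le; lra|].
  apply HK. apply (iter_binv_fst a (S i) (x, y)); auto.
Qed.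

Lemma ex_geomK K b : 0 <= b < 1 -> ex_series (fun i => K * b ^ i).
Proof. intros Hb. exact (ex_series_scal_l K (fun n => b ^ n) (ex_series_geom b ltac:(rewrite Rabs_pos_eq; lra))). Qed.

Lemma Series_geomK K b : 0 <= b < 1 -> Series (fun i => K * b ^ i) = K / (1 - b).
Proof. intros Hb. rewrite Series_scal_l, Series_geom by (rewrite Rabs_pos_eq; lra). field; lra. Qed.

Lemma ex_abs_le (u c : nat -> R) : (forall i, Rabs (u i) <= c i) -> ex_series c ->
  ex_series u /\ ex_series (fun i => Rabs (u i)).
Proof.
  intros H Hc. split.
  - apply (ex_series_le u c); auto.
  - apply (ex_series_le (fun i => Rabs (u i)) c); auto.
    intro n. unfold norm; simpl. unfold abs; simpl. rewrite Rabs_Rabsolu. auto.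
Qed.

Lemma Series_abs_le (u c : nat -> R) : (forall i, Rabs (u i) <= c i) -> ex_series c ->
  Rabs (Series u) <= Series c.
Proof.
  intros H Hc. destruct (ex_abs_le u c H Hc) as [_ Ha].
  eapply Rle_trans; [apply Series_Rabs; auto|].
  apply Series_le; auto. intro n; split; auto. apply Rabs_pos.
Qed.

Lemma ex_hterm a b g K x y : 0 <= b < 1 -> bounded_by g K -> 0 <= x < 1 ->
  ex_series (hterm a b g x y).
Proof.
  intros Hb HK Hx. apply (ex_abs_le _ (fun i => K * b ^ i)); [|apply ex_geomK; auto].
  intro; apply hterm_bound; auto; lra.
Qed.

Lemma S_bound a b g K x y : 0 <= b < 1 -> bounded_by g K -> 0 <= x < 1 ->
  Rabs (Series (hterm a b g x y)) <= K / (1 - b).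
Proof.
  intros Hb HK Hx. rewrite <- Series_geomK by auto.
  apply Series_abs_le; [|apply ex_geomK; auto]. intro; apply hterm_bound; auto; lra.
Qed.

Lemma S_shift a b g K x y : 0 <= b < 1 -> bounded_by g K -> 0 <= x < 1 ->
  Binv a (Bmap a (x, y)) = (x, y) ->
  Series (hterm a b g (fst (Bmap a (x, y))) (snd (Bmap a (x, y)))) =
  g x y + b * Series (hterm a b g x y).
Proof.
  intros Hb HK Hx E.
  assert (Hx' : 0 <= fst (Bmap a (x, y)) < 1) by (apply bmap_fst; auto).
  rewrite Series_incr_1 by (apply (ex_hterm a b g K); auto).
  rewrite <- Series_scal_l. f_equal.
  - unfold hterm. rewrite <- surjective_pairing. change (Nat.iter 1 (Binv a) (Bmap a (x, y))) with (Binv a (Bmap a (x, y))). rewrite E. cbn [fst snd pow]. ring.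
  - apply Series_ext. intro n. unfold hterm. rewrite <- surjective_pairing.
    rewrite (Nat.iter_succ_r (S n)). rewrite E. cbn [pow]. ring.
Qed.

Definition X4 (p : pt4) := fst (fst (fst p)).
Definition Y4 (p : pt4) := snd (fst (fst p)).
Definition Z4 (p : pt4) := snd (fst p).
Definition W4 (p : pt4) := snd p.

Lemma pt4_eta (p : pt4) : p = (X4 p, Y4 p, Z4 p, W4 p).
Proof. destruct p as [[[x y] z] w]; reflexivity. Qed.

Lemma Bg_proj a b g x y z w : Bg a b g (x, y, z, w) =
  (fst (Bmap a (x, y)), snd (Bmap a (x, y)), fst (Bmap b (z, w)), snd (Bmap b (z, w)) + g x y).
Proof.
  unfold Bg. destruct (Bmap a (x, y)) as [x' y']. destruct (Bmap b (z, w)) as [z' w']. reflexivity.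
Qed.

Lemma bmap_shift b z w c : Bmap b (z, w + c) = (fst (Bmap b (z, w)), snd (Bmap b (z, w)) + b * c).
Proof. unfold Bmap. destruct (Rlt_dec z (1/2)); simpl; f_equal; ring. Qed.

Lemma hg_hginv a b g q : hg a b g (hg_inv a b g q) = q.
Proof. destruct q as [[[x y] z] w]. simpl. f_equal. ring. Qed.

Lemma hginv_hg a b g p : hg_inv a b g (hg a b g p) = p.
Proof. destruct p as [[[x y] z] w]. simpl. f_equal. ring. Qed.

Lemma conj_eq a b g K v : 0 < a < 1/2 -> 0 < b < 1/2 -> bounded_by g K -> Aset a b v ->
  B0 a b v = hg_inv a b g (Bg a b g (hg a b g v)).
Proof.
  intros Ha Hb HK. destruct v as [[[x y] z] w]. intros [Hx [Hy [Hz Hw]]].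
  pose proof (cantor_bound a y ltac:(lra) Hy).
  unfold B0, hg. rewrite !Bg_proj. rewrite bmap_shift. unfold hg_inv.
  rewrite (S_shift a b g K x y) by (auto; try lra; apply binv_bmap; nra).
  f_equal. cbn [snd]. ring.
Qed.

Lemma B0_A a b v : 0 < a < 1/2 -> 0 < b < 1/2 -> Aset a b v -> Aset a b (B0 a b v).
Proof.
  intros Ha Hb. destruct v as [[[x y] z] w]. intros [Hx [Hy [Hz Hw]]].
  unfold B0. rewrite Bg_proj. rewrite Rplus_0_r. repeat split.
  - apply bmap_fst; auto.
  - apply bmap_fst; auto.
  - destruct (bmap_snd a x y) as [E|E]; rewrite E; apply cantor_fwd; auto; lra.
  - apply bmap_fst; auto.
  - apply bmap_fst; auto.
  - destruct (bmap_snd b z w) as [E|E]; rewrite E; apply cantor_fwd; auto; lra.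
Qed.

Lemma B0_back a b p : 0 < a < 1/2 -> 0 < b < 1/2 -> Aset a b p ->
  exists p', Aset a b p' /\ B0 a b p' = p.
Proof.
  intros Ha Hb. destruct p as [[[x y] z] w]. intros [Hx [Hy [Hz Hw]]].
  exists (fst (Binv a (x, y)), snd (Binv a (x, y)), fst (Binv b (z, w)), snd (Binv b (z, w))).
  destruct (binv_PC a (x, y) Ha (conj Hx Hy)) as [H1 H2].
  destruct (binv_PC b (z, w) Hb (conj Hz Hw)) as [H3 H4].
  split; [repeat split; tauto|].
  unfold B0. rewrite Bg_proj. rewrite <- !surjective_pairing.
  rewrite !bmap_binv by (auto; lra). simpl. f_equal. ring.
Qed.

Lemma B0_back_iter a b n p : 0 < a < 1/2 -> 0 < b < 1/2 -> Aset a b p ->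
  exists p', Aset a b p' /\ Nat.iter n (B0 a b) p' = p.
Proof.
  intros Ha Hb. revert p; induction n as [|n IH]; intros p Hp.
  - exists p; auto.
  - destruct (B0_back a b p Ha Hb Hp) as [p1 [Hp1 E1]].
    destruct (IH p1 Hp1) as [p' [Hp' E']].
    exists p'; split; auto. rewrite Nat.iter_succ_r. simpl in *.
    rewrite <- Nat.iter_succ_r. simpl. rewrite E'. auto.
Qed.

Section AG.
Variables (a b : R) (g : R -> R -> R) (delta gn : R).
Hypotheses (Ha : 0 < a < 1/2) (Hb : 0 < b < 1/2) (Hd : 0 < delta) (Hgn : bounded_by g gn).

Lemma hg_B0 v : Aset a b v -> hg a b g (B0 a b v) = Bg a b g (hg a b g v).
Proof. intros Hv. rewrite (conj_eq a b g gn v); auto. apply hg_hginv. Qed.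

Lemma hg_iter n v : Aset a b v ->
  Aset a b (Nat.iter n (B0 a b) v) /\ hg a b g (Nat.iter n (B0 a b) v) = Nat.iter n (Bg a b g) (hg a b g v).
Proof.
  intros Hv. induction n as [|n [IH1 IH2]]; simpl; auto.
  split; [apply B0_A; auto|]. rewrite hg_B0 by auto. rewrite IH2; auto.
Qed.

Lemma gn_pos : 0 <= gn.
Proof. exact (bounded_nonneg g gn Hgn). Qed.

Lemma C_pos : 0 <= gn / (1 - b).
Proof. pose proof gn_pos. apply Rdiv_le_0_compat; lra. Qed.

Lemma hg_V p : Aset a b p -> Vset b delta gn (hg a b g p).
Proof.
  destruct p as [[[x y] z] w]. intros [Hx [Hy [Hz Hw]]].
  pose proof (cantor_bound a y ltac:(lra) Hy). pose proof (cantor_bound b w ltac:(lra) Hw).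
  pose proof (S_bound a b g gn x y ltac:(lra) Hgn Hx).
  apply Rabs_le_between in H1. simpl. lra.
Qed.

Lemma C1 p : Aset a b p -> Ag a b g delta gn (hg a b g p).
Proof.
  intros Hp n. destruct (B0_back_iter a b n p Ha Hb Hp) as [p' [Hp' E]].
  exists (hg a b g p'). split; [apply hg_V; auto|].
  destruct (hg_iter n p' Hp') as [_ E2]. rewrite <- E2, E. auto.
Qed.

Lemma V_inv p : Vset b delta gn p -> Vset b delta gn (Bg a b g p).
Proof.
  destruct p as [[[x y] z] w]. intros (Hx & Hy & Hz & Hw).
  rewrite Bg_proj. pose proof C_pos.
  assert (Hg : Rabs (g x y) <= gn) by (apply Hgn; auto). apply Rabs_le_between in Hg.
  assert (E : gn = (1 - b) * (gn / (1 - b))) by (field; lra).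
  cbv beta iota. repeat split; try (apply bmap_fst; auto).
  - destruct (bmap_snd a x y) as [E1|E1]; rewrite E1; nra.
  - destruct (bmap_snd a x y) as [E1|E1]; rewrite E1; nra.
  - destruct (bmap_snd b z w) as [E1|E1]; rewrite E1; nra.
  - destruct (bmap_snd b z w) as [E1|E1]; rewrite E1; nra.
Qed.

Lemma ycap n p : Vset b delta gn p ->
  Vset b delta gn (Nat.iter n (Bg a b g) p) /\
  capprox a (-delta) (1 + delta) n (Y4 (Nat.iter n (Bg a b g) p)).
Proof.
  intros Hp. induction n as [|n [IH1 IH2]].
  - simpl. split; auto. destruct p as [[[x y] z] w]. simpl in *. tauto.
  - simpl. split; [apply V_inv; auto|].
    revert IH1 IH2. destruct (Nat.iter n (Bg a b g) p) as [[[x y] z] w].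
    intros _ IH2. rewrite Bg_proj. unfold Y4 in *; simpl in *.
    exists y; split; auto. apply bmap_snd.
Qed.

Definition eta := (1 - 2 * a) / (4 * a).
Lemma eta_pos : 0 < eta.
Proof. unfold eta. apply Rdiv_lt_0_compat; lra. Qed.
Lemma a_eta : a * eta = (1 - 2 * a) / 4.
Proof. unfold eta. field. lra. Qed.

Definition Wf (p : pt4) := W4 p - Series (hterm a b g (X4 p) (Y4 p)).

Definition Qs (p : pt4) := Vset b delta gn p /\ - eta <= Y4 p <= 1 + eta.

Lemma Q_step p : Qs p -> Qs (Bg a b g p) /\
  (Wf (Bg a b g p) = b * Wf p \/ Wf (Bg a b g p) = b * Wf p + 1 - b).
Proof.
  destruct p as [[[x y] z] w]. intros [HV Hy]. unfold Y4 in Hy; simpl in Hy.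
  pose proof eta_pos. pose proof a_eta.
  split; [split; [apply V_inv; auto|]|].
  - rewrite Bg_proj. unfold Y4; cbn [fst snd].
    destruct (bmap_snd a x y) as [E1|E1]; rewrite E1; split; nra.
  - destruct HV as [Hx _].
    unfold Wf. rewrite Bg_proj. unfold W4, X4, Y4; cbn [fst snd].
    rewrite (S_shift a b g gn x y) by (auto; try lra; apply binv_bmap; nra).
    destruct (bmap_snd b z w) as [E1|E1]; rewrite E1; [left|right]; ring.
Qed.

Lemma Wcap lo hi n p : Qs p -> lo <= Wf p <= hi ->
  Qs (Nat.iter n (Bg a b g) p) /\ capprox b lo hi n (Wf (Nat.iter n (Bg a b g) p)).
Proof.
  intros Hq Hw. induction n as [|n [IH1 IH2]]; simpl; auto.
  destruct (Q_step _ IH1) as [H1 H2]. split; auto.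
  exists (Wf (Nat.iter n (Bg a b g) p)); split; auto.
Qed.

Lemma C2 q : Ag a b g delta gn q -> Aset a b (hg_inv a b g q).
Proof.
  intros Hq.
  assert (HV : Vset b delta gn q).
  { destruct (Hq O) as [p0 [H0 E]]. simpl in E. subst. auto. }
  pose proof eta_pos as Heta. pose proof C_pos as HC.
  destruct (pow_lt_1_zero a ltac:(rewrite Rabs_pos_eq; lra) (eta / delta))
    as [K0 HK0]; [apply Rdiv_lt_0_compat; lra|].
  specialize (HK0 K0 (le_n _)). rewrite Rabs_pos_eq in HK0 by (apply pow_le; lra).
  assert (HK0' : delta * a ^ K0 <= eta).
  { apply (Rmult_lt_compat_l delta) in HK0; [|lra].
    replace (delta * (eta / delta)) with eta in HK0 by (field; lra). lra. }
  set (D := delta + 2 * (gn / (1 - b))).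
  assert (HD : 0 <= D) by (unfold D; lra).
  assert (Hycap : forall n, capprox a (-delta) (1+delta) n (Y4 q)).
  { intro n. destruct (Hq n) as [p0 [H0 E]]. rewrite <- E. apply ycap; auto. }
  assert (Hwcap : forall n, capprox b (-D) (1 + D) n (Wf q)).
  { intro n. destruct (Hq (n + K0)%nat) as [p0 [H0 E]].
    rewrite Nat.iter_add in E.
    set (p1 := Nat.iter K0 (Bg a b g) p0) in E.
    destruct (ycap K0 p0 H0) as [HV1 Hy1]. fold p1 in HV1, Hy1.
    apply cap_bound in Hy1; [|lra|lra].
    assert (Q1 : Qs p1) by (split; auto; lra).
    assert (HW1 : -D <= Wf p1 <= 1 + D).
    { destruct p1 as [[[x y] z] w]. destruct HV1 as (Hx & _ & _ & Hw).
      pose proof (S_bound a b g gn x y ltac:(lra) Hgn Hx) as HS.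
      apply Rabs_le_between in HS. unfold Wf, W4, X4, Y4; simpl. unfold D. lra. }
    rewrite <- E. apply Wcap; auto. }
  destruct q as [[[x y] z] w].
  destruct HV as (Hx & _ & Hz & _). simpl. repeat split; try lra.
  - apply (cantor_of_caps a delta); auto; lra.
  - apply (cantor_of_caps b D); auto; lra.
Qed.

End AG.

Lemma abs_le_norm u v : Rabs u <= sqrt (u ^ 2 + v ^ 2).
Proof.
  rewrite <- sqrt_Rsqr_abs. apply sqrt_le_1_alt. unfold Rsqr.
  assert (0 <= v ^ 2) by (apply pow2_ge_0). nra.
Qed.

Lemma Cb1_lip g : Cb1 g -> exists L, 0 <= L /\ forall x y x' y',
  0 <= x < 1 -> 0 <= x' < 1 -> Rabs (g x' y' - g x y) <= L * (Rabs (x' - x) + Rabs (y' - y)).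
Proof.
  intros [_ [[gx [gy [Hd [K' HK']]]] Hc]].
  assert (HK'0 : 0 <= K').
  { specialize (HK' (1/2) 0 ltac:(lra)). pose proof (sqrt_pos (gx (1/2) 0 ^ 2 + gy (1/2) 0 ^ 2)). lra. }
  assert (Hgx : forall x y, 0 < x < 1 -> Rabs (gx x y) <= K').
  { intros x y H. eapply Rle_trans; [apply (abs_le_norm _ (gy x y))|]. auto. }
  assert (Hgy : forall x y, 0 < x < 1 -> Rabs (gy x y) <= K').
  { intros x y H. eapply Rle_trans; [apply (abs_le_norm _ (gx x y))|].
    rewrite Rplus_comm. auto. }
  assert (Hpos : forall x y x' y', 0 <= x < 1 -> 0 <= x' < 1 -> (0 < x \/ 0 < x') ->
     Rabs (g x' y' - g x y) <= K' * (Rabs (x' - x) + Rabs (y' - y))).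
  { intros x y x' y' Hx Hx' Hp.
    set (dx := x' - x). set (dy := y' - y).
    set (h := fun t => g (x + t * dx) (y + t * dy)).
    assert (Hin : forall t, 0 < t < 1 -> 0 < x + t * dx < 1).
    { intros t Ht. unfold dx. replace (x + t * (x' - x)) with ((1 - t) * x + t * x') by ring.
      assert (0 <= (1 - t) * x) by (apply Rmult_le_pos; lra).
      assert (0 <= t * x') by (apply Rmult_le_pos; lra).
      destruct Hp; split; nra. }
    assert (Hin' : forall t, 0 <= t <= 1 -> 0 <= x + t * dx < 1).
    { intros t Ht. unfold dx. replace (x + t * (x' - x)) with ((1 - t) * x + t * x') by ring.
      assert (0 <= (1 - t) * x) by (apply Rmult_le_pos; lra).
      assert (0 <= t * x') by (apply Rmult_le_pos; lra). split; [lra|].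
      destruct (Rlt_or_le t 1).
      - assert (0 < (1 - t) * (1 - x)) by (apply Rmult_lt_0_compat; lra).
        assert (0 <= t * (1 - x')) by (apply Rmult_le_pos; lra). nra.
      - assert (0 <= (1 - t) * (1 - x)) by (apply Rmult_le_pos; lra).
        assert (0 < t * (1 - x')) by (apply Rmult_lt_0_compat; lra). nra. }
    assert (Hmid : forall e, 0 < e < 1/2 -> Rabs (h (1 - e) - h e) <= K' * (Rabs dx + Rabs dy)).
    { intros e He.
      destruct (MVT_cor2 h (fun t => gx (x + t * dx) (y + t * dy) * dx + gy (x + t * dx) (y + t * dy) * dy) e (1 - e))
        as [c [Ec Hc']]; [lra| |].
      - intros c Hc'. unfold h.
        apply (derivable_pt_lim_comp_2d g (fun t => x + t * dx) (fun t => y + t * dy)).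
        + apply Hd. apply Hin. lra.
        + apply is_derive_Reals. auto_derive; auto; ring.
        + apply is_derive_Reals. auto_derive; auto; ring.
      - rewrite Ec. assert (Hic : 0 < x + c * dx < 1) by (apply Hin; lra).
        rewrite Rabs_mult, (Rabs_pos_eq (1 - e - e)) by lra.
        eapply Rle_trans; [apply Rmult_le_compat_r; [lra| apply Rabs_triang]|].
        rewrite !Rabs_mult.
        pose proof (Hgx _ (y + c * dy) Hic). pose proof (Hgy _ (y + c * dy) Hic).
        pose proof (Rabs_pos dx). pose proof (Rabs_pos dy).
        pose proof (Rabs_pos (gx (x + c * dx) (y + c * dy))).
        pose proof (Rabs_pos (gy (x + c * dx) (y + c * dy))).
        assert (Rabs (gx (x + c * dx) (y + c * dy)) * Rabs dx <= K' * Rabs dx) by (apply Rmult_le_compat_r; auto).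
        assert (Rabs (gy (x + c * dx) (y + c * dy)) * Rabs dy <= K' * Rabs dy) by (apply Rmult_le_compat_r; auto).
        set (u := Rabs (gx (x + c * dx) (y + c * dy)) * Rabs dx + Rabs (gy (x + c * dx) (y + c * dy)) * Rabs dy).
        assert (0 <= u) by (unfold u; apply Rplus_le_le_0_compat; apply Rmult_le_pos; auto).
        assert (u <= K' * (Rabs dx + Rabs dy)) by (unfold u; lra).
        nra. }
    assert (Eh0 : h 0 = g x y) by (unfold h; f_equal; ring).
    assert (Eh1 : h 1 = g x' y') by (unfold h, dx, dy; f_equal; ring).
    rewrite <- Eh0, <- Eh1.
    apply Rle_plus_epsilon. intros eps Heps.
    destruct (Hc x y Hx (eps/2) ltac:(lra)) as [d1 [Hd1 Hc1]].
    destruct (Hc x' y' Hx' (eps/2) ltac:(lra)) as [d2 [Hd2 Hc2]].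
    set (m := Rabs dx + Rabs dy + 1).
    assert (Hm : 0 < m) by (unfold m; pose proof (Rabs_pos dx); pose proof (Rabs_pos dy); lra).
    set (e := Rmin (1/4) (Rmin (d1 / (2 * m)) (d2 / (2 * m)))).
    assert (He1 : e <= 1/4) by apply Rmin_l.
    assert (He2 : e <= d1 / (2 * m)) by (eapply Rle_trans; [apply Rmin_r|apply Rmin_l]).
    assert (He3 : e <= d2 / (2 * m)) by (eapply Rle_trans; [apply Rmin_r|apply Rmin_r]).
    assert (He0 : 0 < e).
    { unfold e. apply Rmin_pos; [lra|apply Rmin_pos; apply Rdiv_lt_0_compat; lra]. }
    assert (Hdx : Rabs dx <= m) by (unfold m; pose proof (Rabs_pos dy); lra).
    assert (Hdy : Rabs dy <= m) by (unfold m; pose proof (Rabs_pos dx); lra).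
    assert (Hem1 : e * m <= d1 / 2) by (apply (Rmult_le_compat_r m) in He2; [|lra];
       replace (d1 / (2 * m) * m) with (d1/2) in He2 by (field; lra); lra).
    assert (Hem2 : e * m <= d2 / 2) by (apply (Rmult_le_compat_r m) in He3; [|lra];
       replace (d2 / (2 * m) * m) with (d2/2) in He3 by (field; lra); lra).
    assert (A1 : Rabs (h e - h 0) < eps / 2).
    { rewrite Eh0. unfold h. apply Hc1.
      - apply Hin'. lra.
      - replace (x + e * dx - x) with (e * dx) by ring. rewrite Rabs_mult, Rabs_pos_eq by lra. nra.
      - replace (y + e * dy - y) with (e * dy) by ring. rewrite Rabs_mult, Rabs_pos_eq by lra. nra. }
    assert (A2 : Rabs (h (1 - e) - h 1) < eps / 2).
    { rewrite Eh1. unfold h. apply Hc2.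
      - apply Hin'. lra.
      - replace (x + (1 - e) * dx - x') with (- (e * dx)) by (unfold dx; ring).
        rewrite Rabs_Ropp, Rabs_mult, Rabs_pos_eq by lra. nra.
      - replace (y + (1 - e) * dy - y') with (- (e * dy)) by (unfold dy; ring).
        rewrite Rabs_Ropp, Rabs_mult, Rabs_pos_eq by lra. nra. }
    specialize (Hmid e ltac:(lra)).
    replace (h 1 - h 0) with ((h 1 - h (1 - e)) + (h (1 - e) - h e) + (h e - h 0)) by ring.
    eapply Rle_trans; [apply Rabs_triang|].
    eapply Rle_trans; [apply Rplus_le_compat_r; apply Rabs_triang|].
    rewrite Rabs_minus_sym in A2. fold dx dy. lra. }
  exists K'. split; auto. intros x y x' y' Hx Hx'.
  destruct (Rlt_or_le 0 x) as [Px|Px]; [apply Hpos; auto|].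
  destruct (Rlt_or_le 0 x') as [Px'|Px']; [apply Hpos; auto|].
  assert (x = 0) by lra. assert (x' = 0) by lra. subst x x'.
  apply Rle_plus_epsilon. intros eps Heps.
  destruct (Hc 0 y Hx (eps/2) ltac:(lra)) as [d1 [Hd1 Hc1]].
  set (e := Rmin (1/2) (Rmin (d1/2) (eps / (2 * (K' + 1))))).
  assert (He1 : e <= 1/2) by apply Rmin_l.
  assert (He2 : e <= d1 / 2) by (eapply Rle_trans; [apply Rmin_r|apply Rmin_l]).
  assert (He3 : e <= eps / (2 * (K' + 1))) by (eapply Rle_trans; [apply Rmin_r|apply Rmin_r]).
  assert (He0 : 0 < e).
  { unfold e. apply Rmin_pos; [lra|apply Rmin_pos; apply Rdiv_lt_0_compat; lra]. }
  assert (HeK : K' * e <= eps / 2).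
  { apply (Rmult_le_compat_l K') in He3; auto.
    assert (K' * (eps / (2 * (K' + 1))) <= eps / 2).
    { apply (Rmult_le_reg_r (2 * (K' + 1))); [lra|].
      replace (K' * (eps / (2 * (K' + 1))) * (2 * (K' + 1))) with (K' * eps) by (field; lra).
      nra. }
    lra. }
  assert (A1 : Rabs (g e y - g 0 y) < eps / 2).
  { apply Hc1; try lra.
    - rewrite Rminus_0_r, Rabs_pos_eq; lra.
    - rewrite Rminus_diag, Rabs_R0; lra. }
  assert (A2 := Hpos e y 0 y' ltac:(lra) ltac:(lra) ltac:(lra)).
  replace (g 0 y' - g 0 y) with ((g 0 y' - g e y) + (g e y - g 0 y)) by ring.
  eapply Rle_trans; [apply Rabs_triang|].
  rewrite Rminus_diag, Rabs_R0. rewrite Rminus_0_l, Rabs_Ropp, (Rabs_pos_eq e) in A2 by lra.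
  nra.
Qed.

Lemma Rabs_div_pos u a : 0 < a -> Rabs (u / a) = Rabs u / a.
Proof. intros Ha. unfold Rdiv. rewrite Rabs_mult, Rabs_inv, (Rabs_pos_eq a) by lra. auto. Qed.

Lemma sep a x y x' y' n : 0 < a < 1/2 -> PC a (x, y) -> PC a (x', y') ->
  (Rabs (fst (Nat.iter n (Binv a) (x, y)) - fst (Nat.iter n (Binv a) (x', y'))) <= Rabs (x - x') /\
   Rabs (snd (Nat.iter n (Binv a) (x, y)) - snd (Nat.iter n (Binv a) (x', y'))) = Rabs (y - y') / a ^ n)
  \/ (1 - 2 * a) * a ^ n <= Rabs (y - y').
Proof.
  intros Ha Hp Hq. induction n as [|n IH].
  - left. simpl. split; [lra|]. field.
  - assert (Han : 0 < a ^ n) by (apply pow_lt; lra).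
    assert (Hsn : a ^ S n = a * a ^ n) by reflexivity.
    destruct IH as [[IH1 IH2]|IH]; [|right; rewrite Hsn; assert (0 <= (1 - 2 * a) * a ^ n) by (apply Rmult_le_pos; lra);
       apply Rle_trans with ((1 - 2 * a) * a ^ n); auto; nra].
    pose proof (iter_binv_PC a n (x, y) Ha Hp) as HP.
    pose proof (iter_binv_PC a n (x', y') Ha Hq) as HQ.
    simpl Nat.iter. revert IH1 IH2 HP HQ.
    destruct (Nat.iter n (Binv a) (x, y)) as [u v].
    destruct (Nat.iter n (Binv a) (x', y')) as [u' v'].
    cbn [fst snd]. intros IH1 IH2 [HP1 HP2] [HQ1 HQ2]. cbn [fst snd] in *.
    rewrite Hsn.
    unfold Binv. destruct (Rle_dec v (1/2)) as [Hv|Hv]; destruct (Rle_dec v' (1/2)) as [Hv'|Hv']; cbn [fst snd].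
    + left. split.
      * replace (u / 2 - u' / 2) with ((u - u') / 2) by field. rewrite Rabs_div_pos by lra.
        pose proof (Rabs_pos (u - u')). lra.
      * replace (v / a - v' / a) with ((v - v') / a) by (field; lra). rewrite Rabs_div_pos by lra.
        rewrite IH2. field. lra.
    + right. destruct (cantor_left a v Ha HP2 Hv) as [_ H1].
      destruct (cantor_right a v' Ha HQ2 ltac:(lra)) as [_ H2].
      assert (1 - 2 * a <= Rabs (v - v')) by (rewrite Rabs_minus_sym, Rabs_pos_eq; lra).
      rewrite IH2 in H. apply (Rmult_le_compat_r (a ^ n)) in H; [|lra].
      replace (Rabs (y - y') / a ^ n * a ^ n) with (Rabs (y - y')) in H by (field; lra).
      assert (0 <= (1 - 2 * a) * a ^ n) by (apply Rmult_le_pos; lra).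
      apply Rle_trans with ((1 - 2 * a) * a ^ n); auto; nra.
    + right. destruct (cantor_left a v' Ha HQ2 Hv') as [_ H1].
      destruct (cantor_right a v Ha HP2 ltac:(lra)) as [_ H2].
      assert (1 - 2 * a <= Rabs (v - v')) by (rewrite Rabs_pos_eq; lra).
      rewrite IH2 in H. apply (Rmult_le_compat_r (a ^ n)) in H; [|lra].
      replace (Rabs (y - y') / a ^ n * a ^ n) with (Rabs (y - y')) in H by (field; lra).
      assert (0 <= (1 - 2 * a) * a ^ n) by (apply Rmult_le_pos; lra).
      apply Rle_trans with ((1 - 2 * a) * a ^ n); auto; nra.
    + left. split.
      * replace ((u + 1) / 2 - (u' + 1) / 2) with ((u - u') / 2) by field. rewrite Rabs_div_pos by lra.
        pose proof (Rabs_pos (u - u')). lra.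
      * replace ((v - (1 - a)) / a - (v' - (1 - a)) / a) with ((v - v') / a) by (field; lra).
        rewrite Rabs_div_pos by lra. rewrite IH2. field. lra.
Qed.

Section SB.
Variables (a b : R) (g : R -> R -> R) (K L : R).
Hypotheses (Ha : 0 < a < 1/2) (Hb : 0 < b < 1/2) (HK : bounded_by g K) (HL : 0 <= L)
  (Hlip : forall x y x' y', 0 <= x < 1 -> 0 <= x' < 1 ->
     Rabs (g x' y' - g x y) <= L * (Rabs (x' - x) + Rabs (y' - y))).

Definition Mc := L + 2 * K / (1 - 2 * a).

Lemma K_pos : 0 <= K.
Proof. exact (bounded_nonneg g K HK). Qed.

Lemma Mc_ge : L <= Mc /\ 2 * K <= Mc * (1 - 2 * a).
Proof.
  pose proof K_pos. unfold Mc. split.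
  - assert (0 <= 2 * K / (1 - 2 * a)) by (apply Rdiv_le_0_compat; lra). lra.
  - assert (2 * K / (1 - 2 * a) * (1 - 2 * a) = 2 * K) by (field; lra).
    assert (0 <= L * (1 - 2 * a)) by (apply Rmult_le_pos; lra). nra.
Qed.

Lemma term_diff x y x' y' i : PC a (x, y) -> PC a (x', y') ->
  let P := Nat.iter (S i) (Binv a) (x, y) in
  let Q := Nat.iter (S i) (Binv a) (x', y') in
  Rabs (g (fst P) (snd P) - g (fst Q) (snd Q)) <=
  Mc * Rabs (x - x') + Rmin (2 * K) (Mc * Rabs (y - y') / a ^ (S i)).
Proof.
  intros Hp Hq P Q.
  pose proof K_pos. destruct Mc_ge as [HM1 HM2].
  assert (Han : 0 < a ^ S i) by (apply pow_lt; lra).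
  destruct (iter_binv_PC a (S i) _ Ha Hp) as [HP1 _].
  destruct (iter_binv_PC a (S i) _ Ha Hq) as [HQ1 _]. fold P in HP1. fold Q in HQ1.
  assert (B2 : Rabs (g (fst P) (snd P) - g (fst Q) (snd Q)) <= 2 * K).
  { eapply Rle_trans; [apply Rabs_triang|]. rewrite Rabs_Ropp.
    pose proof (HK (fst P) (snd P) HP1). pose proof (HK (fst Q) (snd Q) HQ1). lra. }
  assert (HMx : 0 <= Mc * Rabs (x - x')) by (apply Rmult_le_pos; [lra|apply Rabs_pos]).
  destruct (sep a x y x' y' (S i) Ha Hp Hq) as [[S1 S2]|S3].
  - fold P Q in S1, S2. assert (B1 : Rabs (g (fst P) (snd P) - g (fst Q) (snd Q)) <=
        Mc * Rabs (x - x') + Mc * Rabs (y - y') / a ^ S i).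
    { rewrite Rabs_minus_sym. eapply Rle_trans; [apply Hlip; auto|].
      rewrite (Rabs_minus_sym (fst Q)), (Rabs_minus_sym (snd Q)), S2.
      assert (0 <= Rabs (y - y') / a ^ S i) by (apply Rdiv_le_0_compat; [apply Rabs_pos|lra]).
      pose proof (Rabs_pos (x - x')).
      replace (Mc * Rabs (y - y') / a ^ S i) with (Mc * (Rabs (y - y') / a ^ S i)) by (field; lra).
      apply Rle_trans with (L * (Rabs (x - x') + Rabs (y - y') / a ^ S i)).
      - apply Rmult_le_compat_l; auto; lra.
      - apply Rle_trans with (Mc * (Rabs (x - x') + Rabs (y - y') / a ^ S i)); [|lra].
        apply Rmult_le_compat_r; lra. }
    apply Rmin_case; lra.
  - assert (E : Rmin (2 * K) (Mc * Rabs (y - y') / a ^ S i) = 2 * K).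
    { apply Rmin_left. apply (Rmult_le_reg_r (a ^ S i)); auto.
      replace (Mc * Rabs (y - y') / a ^ S i * a ^ S i) with (Mc * Rabs (y - y')) by (field; lra).
      assert (0 <= Mc) by (pose proof (Rabs_pos (x - x')); lra).
      apply Rle_trans with (Mc * ((1 - 2 * a) * a ^ S i)); [nra|].
      apply Rmult_le_compat_l; auto. }
    rewrite E. lra.
Qed.

Definition Tser t := Series (fun i => b ^ i * Rmin (2 * K) (Mc * t / a ^ (S i))).

Lemma Tser_ex t : 0 <= t -> ex_series (fun i => b ^ i * Rmin (2 * K) (Mc * t / a ^ (S i))).
Proof.
  intros Ht. pose proof K_pos. destruct Mc_ge as [HM1 HM2].
  apply (ex_abs_le _ (fun i => (2 * K) * b ^ i)); [|apply ex_geomK; lra].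
  intro i. assert (0 < a ^ S i) by (apply pow_lt; lra). assert (0 < b ^ i) by (apply pow_lt; lra).
  assert (0 <= Mc * t / a ^ S i) by (apply Rdiv_le_0_compat; [apply Rmult_le_pos; lra|lra]).
  assert (0 <= Rmin (2 * K) (Mc * t / a ^ S i)) by (apply Rmin_glb; lra).
  assert (Rmin (2 * K) (Mc * t / a ^ S i) <= 2 * K) by apply Rmin_l.
  rewrite Rabs_pos_eq by (apply Rmult_le_pos; lra). nra.
Qed.

Lemma S_diff x y x' y' : PC a (x, y) -> PC a (x', y') ->
  Rabs (Series (hterm a b g x y) - Series (hterm a b g x' y')) <=
  Mc * Rabs (x - x') / (1 - b) + Tser (Rabs (y - y')).
Proof.
  intros Hp Hq. pose proof K_pos.
  destruct Hp as [Hx Hy]; destruct Hq as [Hx' Hy']. simpl in Hx, Hx', Hy, Hy'.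
  rewrite <- Series_minus by (apply (ex_hterm a b g K); auto; lra).
  unfold Tser. rewrite <- (Series_geomK (Mc * Rabs (x - x')) b) by lra.
  rewrite <- Series_plus; [| apply ex_geomK; lra | apply Tser_ex, Rabs_pos].
  apply Series_abs_le.
  - intro i. unfold hterm.
    replace (b ^ i * g (fst (Nat.iter (S i) (Binv a) (x, y))) (snd (Nat.iter (S i) (Binv a) (x, y))) -
        b ^ i * g (fst (Nat.iter (S i) (Binv a) (x', y'))) (snd (Nat.iter (S i) (Binv a) (x', y'))))
      with (b ^ i * (g (fst (Nat.iter (S i) (Binv a) (x, y))) (snd (Nat.iter (S i) (Binv a) (x, y))) -
        g (fst (Nat.iter (S i) (Binv a) (x', y'))) (snd (Nat.iter (S i) (Binv a) (x', y'))))) by ring.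
    rewrite Rabs_mult, Rabs_pos_eq by (apply pow_le; lra).
    pose proof (term_diff x y x' y' i (conj Hx Hy) (conj Hx' Hy')) as T. cbv zeta in T.
    assert (0 <= b ^ i) by (apply pow_le; lra).
    apply Rmult_le_compat_l with (r := b ^ i) in T; auto. lra.
  - apply (ex_series_plus (fun i => Mc * Rabs (x - x') * b ^ i)); [apply ex_geomK; lra|apply Tser_ex, Rabs_pos].
Qed.

End SB.

Lemma exp_le x y : x <= y -> exp x <= exp y.
Proof. intros [H|H]; [left; apply exp_increasing; auto|subst; lra]. Qed.

Lemma pow_exp x n : 0 < x -> x ^ n = exp (INR n * ln x).
Proof. intros Hx. rewrite <- ln_pow by auto. rewrite exp_ln; auto. apply pow_lt; auto. Qed.

Lemma ln_neg x : 0 < x < 1 -> ln x < 0.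
Proof. intros H. rewrite <- ln_1. apply ln_increasing; lra. Qed.

Fixpoint psum (c : nat -> R) (k : nat) : R :=
  match k with O => 0 | S k => psum c k + c k end.

Lemma Series_split c k : ex_series c -> Series c = psum c k + Series (fun j => c (k + j)%nat).
Proof.
  intros Hc. induction k as [|k IH]; simpl.
  - rewrite Rplus_0_l. reflexivity.
  - rewrite IH. rewrite Series_incr_1.
    2: { apply (ex_series_incr_n c k); auto. }
    rewrite Nat.add_0_r, Rplus_assoc. f_equal. f_equal. apply Series_ext. intro j.
    rewrite Nat.add_succ_r. reflexivity.
Qed.

Lemma psum_le c d k : (forall i, c i <= d i) -> psum c k <= psum d k.
Proof. intros H; induction k; simpl; [lra|]. specialize (H k). lra. Qed.

Lemma psum_geom A r k : 0 <= A -> 1 < r -> psum (fun i => A * r ^ i) k <= A * r ^ k / (r - 1).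
Proof.
  intros HA Hr. induction k; simpl.
  - apply Rdiv_le_0_compat; lra.
  - assert (A * r ^ k / (r - 1) + A * r ^ k = A * (r * r ^ k) / (r - 1)) by (field; lra). lra.
Qed.

Lemma find_k a t : 0 < a < 1 -> 0 < t <= 1 -> exists k, a ^ S k < t <= a ^ k.
Proof.
  intros Ha Ht.
  destruct (pow_lt_1_zero a ltac:(rewrite Rabs_pos_eq; lra) t ltac:(lra)) as [N HN].
  specialize (HN N (le_n _)). rewrite Rabs_pos_eq in HN by (apply pow_le; lra).
  induction N as [|N IH]; [simpl in HN; lra|].
  destruct (Rlt_or_le (a ^ N) t) as [H|H]; [apply IH; auto|]. exists N; split; auto.
Qed.

Lemma pow_frac a b X i : 0 < a -> b ^ i * (X / a ^ S i) = X / a * (b / a) ^ i.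
Proof.
  intros Ha. unfold Rdiv. rewrite Rpow_mult_distr, pow_inv. simpl.
  field. split; [apply pow_nonzero; lra | lra].
Qed.

Section TB.
Variables (a b K L : R).
Hypotheses (Ha : 0 < a < 1/2) (Hb : 0 < b < 1/2) (HK : 0 <= K) (HL : 0 <= L).

Lemma Mc_pos : 0 <= Mc a K L.
Proof. unfold Mc. assert (0 <= 2 * K / (1 - 2 * a)) by (apply Rdiv_le_0_compat; lra). lra. Qed.

Lemma Tser_ex' t : 0 <= t -> ex_series (fun i => b ^ i * Rmin (2 * K) (Mc a K L * t / a ^ (S i))).
Proof.
  intros Ht. pose proof Mc_pos.
  apply (ex_abs_le _ (fun i => (2 * K) * b ^ i)); [|apply ex_geomK; lra].
  intro i. assert (0 < a ^ S i) by (apply pow_lt; lra). assert (0 < b ^ i) by (apply pow_lt; lra).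
  assert (0 <= Mc a K L * t / a ^ S i) by (apply Rdiv_le_0_compat; [apply Rmult_le_pos; lra|lra]).
  assert (0 <= Rmin (2 * K) (Mc a K L * t / a ^ S i)) by (apply Rmin_glb; lra).
  assert (Rmin (2 * K) (Mc a K L * t / a ^ S i) <= 2 * K) by apply Rmin_l.
  rewrite Rabs_pos_eq by (apply Rmult_le_pos; lra). nra.
Qed.

Lemma term_nonneg t i : 0 <= t -> 0 <= b ^ i * Rmin (2 * K) (Mc a K L * t / a ^ (S i)).
Proof.
  intros Ht. pose proof Mc_pos.
  assert (0 < a ^ S i) by (apply pow_lt; lra). assert (0 < b ^ i) by (apply pow_lt; lra).
  assert (0 <= Mc a K L * t / a ^ S i) by (apply Rdiv_le_0_compat; [apply Rmult_le_pos; lra|lra]).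
  apply Rmult_le_pos; [lra|apply Rmin_glb; lra].
Qed.

Lemma Tser0 : Tser a b K L 0 <= 0.
Proof.
  unfold Tser. rewrite (Series_ext _ (fun i => 0 * b ^ i)).
  - rewrite Series_geomK by lra. lra.
  - intro i. rewrite Rmult_0_r. unfold Rdiv. rewrite Rmult_0_l.
    rewrite Rmin_right by lra. ring.
Qed.

Lemma Tser_lin t : b < a -> 0 <= t -> Tser a b K L t <= Mc a K L * t / (a - b).
Proof.
  intros Hab Ht. pose proof Mc_pos. unfold Tser.
  replace (Mc a K L * t / (a - b)) with ((Mc a K L * t / a) / (1 - b / a)) by (field; lra).
  rewrite <- Series_geomK by (split; [apply Rdiv_le_0_compat|apply Rlt_div_l]; lra).
  apply Series_le.
  - intro i. split; [apply term_nonneg; auto|]. rewrite <- pow_frac by lra.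
    apply Rmult_le_compat_l; [apply pow_le; lra|apply Rmin_r].
  - apply ex_geomK. split; [apply Rdiv_le_0_compat|apply Rlt_div_l]; lra.
Qed.

Lemma Tser_lt : a < b -> exists C, 0 <= C /\ forall t, 0 < t <= 1 ->
  Tser a b K L t <= C * Rpower t (ln b / ln a).
Proof.
  intros Hab. pose proof Mc_pos as HM.
  set (r := b / a).
  assert (Hr : 1 < r) by (unfold r; apply Rlt_div_r; lra).
  set (C := (Mc a K L / (a * (r - 1)) + 2 * K / (1 - b)) / b).
  assert (HC : 0 <= C).
  { unfold C. apply Rdiv_le_0_compat; [|lra]. apply Rplus_le_le_0_compat; apply Rdiv_le_0_compat; nra. }
  exists C; split; auto. intros t Ht.
  destruct (find_k a t ltac:(lra) Ht) as [k [Hk1 Hk2]].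
  assert (Hak : 0 < a ^ k) by (apply pow_lt; lra).
  assert (Hbk : 0 < b ^ k) by (apply pow_lt; lra).
  unfold Tser. rewrite (Series_split _ k) by (apply Tser_ex'; lra).
  assert (H1 : psum (fun i => b ^ i * Rmin (2 * K) (Mc a K L * t / a ^ S i)) k <=
               Mc a K L * b ^ k / (a * (r - 1))).
  { eapply Rle_trans; [apply (psum_le _ (fun i => (Mc a K L * t / a) * r ^ i))|].
    - intro i. unfold r. rewrite <- pow_frac by lra.
      apply Rmult_le_compat_l; [apply pow_le; lra|apply Rmin_r].
    - eapply Rle_trans; [apply psum_geom; auto; apply Rdiv_le_0_compat; nra|].
      unfold r. rewrite <- (pow_frac a b _ k) by lra.
      assert (E : Mc a K L * b ^ k / (a * (b / a - 1)) = b ^ k * (Mc a K L * a ^ k / a ^ S k) / (b / a - 1))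
        by (simpl; field; repeat split; lra).
      rewrite E. unfold Rdiv. apply Rmult_le_compat_r.
      + apply Rlt_le, Rinv_0_lt_compat. unfold r in Hr; lra.
      + apply Rmult_le_compat_l; [lra|]. apply Rmult_le_compat_r.
        * apply Rlt_le, Rinv_0_lt_compat, pow_lt; lra.
        * apply Rmult_le_compat_l; lra. }
  assert (H2 : Series (fun j => b ^ (k + j) * Rmin (2 * K) (Mc a K L * t / a ^ S (k + j))) <=
               2 * K * b ^ k / (1 - b)).
  { rewrite <- (Series_geomK (2 * K * b ^ k) b) by lra.
    apply Series_le; [|apply ex_geomK; lra].
    intro j. split; [apply term_nonneg; lra|].
    rewrite pow_add. replace (2 * K * b ^ k * b ^ j) with (b ^ k * b ^ j * (2 * K)) by ring.
    apply Rmult_le_compat_l; [apply Rmult_le_pos; apply pow_le; lra|apply Rmin_l]. }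
  assert (H3 : b ^ S k <= Rpower t (ln b / ln a)).
  { pose proof (ln_neg a ltac:(lra)) as Hla.
    rewrite pow_exp by lra. unfold Rpower. apply exp_le.
    assert (Hl : INR (S k) * ln a < ln t).
    { rewrite <- ln_pow by lra. apply ln_increasing; auto. apply pow_lt; lra. }
    assert (Hrho : 0 < ln b / ln a).
    { pose proof (ln_neg b ltac:(lra)).
      replace (ln b / ln a) with ((- ln b) / (- ln a)) by (field; lra).
      apply Rdiv_lt_0_compat; lra. }
    replace (INR (S k) * ln b) with (ln b / ln a * (INR (S k) * ln a)) by (field; lra).
    apply Rmult_le_compat_l; lra. }
  assert (E : C * b ^ S k = Mc a K L * b ^ k / (a * (r - 1)) + 2 * K * b ^ k / (1 - b)).
  { unfold C. simpl. field. repeat split; lra. }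
  assert (C * b ^ S k <= C * Rpower t (ln b / ln a)) by (apply Rmult_le_compat_l; auto).
  lra.
Qed.

Lemma Tser_eq rho : a = b -> 0 < rho < 1 -> exists C, 0 <= C /\ forall t, 0 < t ->
  Tser a b K L t <= C * Rpower t rho.
Proof.
  intros Hab Hrho. pose proof Mc_pos as HM.
  set (X := 2 * K + 1). set (Y0 := (Mc a K L + 1) / a).
  assert (HX : 0 < X) by (unfold X; lra).
  assert (HY : 0 < Y0) by (unfold Y0; apply Rdiv_lt_0_compat; lra).
  pose proof (ln_neg a ltac:(lra)) as Hla.
  set (q := exp ((1 - rho) * ln a)).
  assert (Hq : 0 <= q < 1).
  { unfold q. split; [left; apply exp_pos|]. apply Rlt_le_trans with (exp 0); [apply exp_increasing; rewrite <- (Rmult_0_r (1 - rho)); apply Rmult_lt_compat_l; lra | rewrite exp_0; lra]. }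
  set (C0 := exp ((1 - rho) * ln X + rho * ln Y0)).
  exists (C0 / (1 - q)). split; [apply Rdiv_le_0_compat; [left; apply exp_pos|lra]|].
  intros t Ht. unfold Tser.
  replace (C0 / (1 - q) * Rpower t rho) with ((C0 * Rpower t rho) / (1 - q)) by (field; lra).
  rewrite <- Series_geomK by lra.
  apply Series_le; [|apply ex_geomK; lra].
  intro i. split; [apply term_nonneg; lra|].
  set (Yi := Y0 * t / a ^ i).
  assert (Hai : 0 < a ^ i) by (apply pow_lt; lra).
  assert (HYi : 0 < Yi) by (unfold Yi; apply Rdiv_lt_0_compat; [apply Rmult_lt_0_compat|]; lra).
  assert (Hmin : Rmin (2 * K) (Mc a K L * t / a ^ S i) <= exp ((1 - rho) * ln X + rho * ln Yi)).
  { assert (Hm : Rmin (2 * K) (Mc a K L * t / a ^ S i) <= Rmin X Yi).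
    { apply Rmin_glb.
      - eapply Rle_trans; [apply Rmin_l|]. unfold X; lra.
      - eapply Rle_trans; [apply Rmin_r|]. unfold Yi, Y0. simpl.
        replace ((Mc a K L + 1) / a * t / a ^ i) with ((Mc a K L + 1) * t / (a * a ^ i)) by (field; lra).
        unfold Rdiv. apply Rmult_le_compat_r; [apply Rlt_le, Rinv_0_lt_compat; nra|nra]. }
    eapply Rle_trans; [apply Hm|].
    destruct (Rle_or_lt X Yi) as [H|H].
    - rewrite Rmin_left by auto. rewrite <- (exp_ln X) at 1 by auto. apply exp_le.
      assert (ln X <= ln Yi) by (apply ln_le; auto). nra.
    - rewrite Rmin_right by lra. rewrite <- (exp_ln Yi) at 1 by auto. apply exp_le.
      assert (ln Yi <= ln X) by (apply ln_le; lra). nra. }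
  eapply Rle_trans; [apply Rmult_le_compat_l; [apply pow_le; lra|apply Hmin]|].
  assert (E : b ^ i * exp ((1 - rho) * ln X + rho * ln Yi) = C0 * Rpower t rho * q ^ i).
  { rewrite <- Hab. unfold C0, q, Rpower. rewrite !pow_exp by (try apply exp_pos; lra).
    rewrite ln_exp. rewrite <- !exp_plus. f_equal.
    unfold Yi. rewrite ln_div by (try apply pow_lt; nra). rewrite ln_mult by lra.
    rewrite ln_pow by lra. ring. }
  lra.
Qed.

End TB.

Lemma sqrt_tri A D E : 0 <= A -> sqrt (A + (D + E) ^ 2) <= sqrt (A + D ^ 2) + Rabs E.
Proof.
  intros HA. set (s := sqrt (A + D ^ 2)).
  assert (Hs0 : 0 <= s) by apply sqrt_pos.
  assert (Hs2 : s * s = A + D ^ 2) by (apply sqrt_sqrt; nra).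
  assert (HD : Rabs D <= s).
  { apply Rsqr_incr_0_var; [|auto]. unfold Rsqr. rewrite <- Rabs_mult, Rabs_pos_eq by nra. nra. }
  assert (HE : 0 <= Rabs E) by apply Rabs_pos.
  assert (HDE : D * E <= Rabs D * Rabs E) by (rewrite <- Rabs_mult; apply Rle_abs).
  assert (HE2 : Rabs E * Rabs E = E * E) by (rewrite <- Rabs_mult, Rabs_pos_eq; nra).
  rewrite <- (sqrt_pow2 (s + Rabs E)) by lra. apply sqrt_le_1_alt.
  assert (Rabs D * Rabs E <= s * Rabs E) by (apply Rmult_le_compat_r; auto). nra.
Qed.

Lemma dist_shift x y z w x' y' z' w' s s' :
  dist4 (x, y, z, w + s) (x', y', z', w' + s') <= dist4 (x, y, z, w) (x', y', z', w') + Rabs (s - s').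
Proof.
  unfold dist4. replace (w + s - (w' + s')) with ((w - w') + (s - s')) by ring.
  apply sqrt_tri. repeat apply Rplus_le_le_0_compat; apply pow2_ge_0.
Qed.

Lemma dist_shift_inv x y z w x' y' z' w' s s' :
  dist4 (x, y, z, w) (x', y', z', w') <= dist4 (x, y, z, w + s) (x', y', z', w' + s') + Rabs (s - s').
Proof.
  pose proof (dist_shift x y z (w + s) x' y' z' (w' + s') (- s) (- s')) as H.
  replace (w + s + - s) with w in H by ring. replace (w' + s' + - s') with w' in H by ring.
  replace (- s - - s') with (- (s - s')) in H by ring. rewrite Rabs_Ropp in H. auto.
Qed.

Lemma dist_x x y z w x' y' z' w' : Rabs (x - x') <= dist4 (x, y, z, w) (x', y', z', w').
Proof.
  unfold dist4. rewrite <- sqrt_Rsqr_abs. apply sqrt_le_1_alt. unfold Rsqr.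
  pose proof (pow2_ge_0 (y - y')). pose proof (pow2_ge_0 (z - z')). pose proof (pow2_ge_0 (w - w')). nra.
Qed.

Lemma dist_y x y z w x' y' z' w' : Rabs (y - y') <= dist4 (x, y, z, w) (x', y', z', w').
Proof.
  unfold dist4. rewrite <- sqrt_Rsqr_abs. apply sqrt_le_1_alt. unfold Rsqr.
  pose proof (pow2_ge_0 (x - x')). pose proof (pow2_ge_0 (z - z')). pose proof (pow2_ge_0 (w - w')). nra.
Qed.

Lemma dist_le_sum x y z w x' y' z' w' :
  dist4 (x, y, z, w) (x', y', z', w') <= Rabs (x - x') + Rabs (y - y') + Rabs (z - z') + Rabs (w - w').
Proof.
  unfold dist4. set (A := Rabs (x - x')). set (B := Rabs (y - y')). set (C := Rabs (z - z')). set (D := Rabs (w - w')).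
  assert (0 <= A) by apply Rabs_pos. assert (0 <= B) by apply Rabs_pos.
  assert (0 <= C) by apply Rabs_pos. assert (0 <= D) by apply Rabs_pos.
  rewrite <- (sqrt_pow2 (A + B + C + D)) by lra. apply sqrt_le_1_alt.
  assert (Hsq : forall u, u ^ 2 = Rabs u * Rabs u) by (intro u; rewrite <- Rabs_mult, Rabs_pos_eq; nra).
  rewrite (Hsq (x - x')), (Hsq (y - y')), (Hsq (z - z')), (Hsq (w - w')). fold A B C D.
  assert (0 <= A * B) by nra. assert (0 <= A * C) by nra. assert (0 <= A * D) by nra.
  assert (0 <= B * C) by nra. assert (0 <= B * D) by nra. assert (0 <= C * D) by nra.
  nra.
Qed.

Lemma dist_nonneg p q : 0 <= dist4 p q.
Proof. destruct p as [[[? ?] ?] ?]; destruct q as [[[? ?] ?] ?]. apply sqrt_pos. Qed.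

Lemma rpow_pos d rho : 0 < d -> rpow d rho = Rpower d rho.
Proof. intros H. unfold rpow. destruct (Req_EM_T d 0); [lra|auto]. Qed.

Lemma le_rpow d rho D : 0 < d <= D -> 1 <= D -> 0 < rho < 1 -> d <= D * Rpower d rho.
Proof.
  intros Hd HD Hr. unfold Rpower.
  destruct (Rle_or_lt d 1) as [H|H].
  - assert (ln d <= 0) by (rewrite <- ln_1; apply ln_le; lra).
    assert (d <= exp (rho * ln d)).
    { rewrite <- (exp_ln d) at 1 by lra. apply exp_le. nra. }
    assert (0 < exp (rho * ln d)) by apply exp_pos. nra.
  - assert (0 < ln d) by (rewrite <- ln_1; apply ln_increasing; lra).
    assert (1 <= exp (rho * ln d)) by (rewrite <- exp_0; apply exp_le; nra). nra.
Qed.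

Lemma holder_core rho D C Cs d s t X T :
  0 < rho < 1 -> 1 <= D -> 0 <= C -> 0 <= Cs -> 0 <= d <= D -> 0 <= s <= d -> 0 <= t <= d ->
  X <= d + Cs * s + T -> (t = 0 -> T <= 0) -> (0 < t -> T <= C * Rpower t rho) ->
  X <= (D * (1 + Cs) + C) * rpow d rho.
Proof.
  intros Hr HD HC HCs Hd Hs Ht HX HT0 HT.
  destruct (Req_dec d 0) as [E|E].
  - subst d. unfold rpow. destruct (Req_EM_T 0 0); [|lra].
    assert (s = 0) by lra. assert (t = 0) by lra. specialize (HT0 H0). subst. nra.
  - rewrite rpow_pos by lra.
    assert (Hd' : 0 < d) by lra.
    assert (H1 : d <= D * Rpower d rho) by (apply le_rpow; lra).
    assert (Hp : 0 < Rpower d rho) by apply exp_pos.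
    assert (H2 : T <= C * Rpower d rho).
    { destruct (Req_dec t 0) as [Et|Et].
      - specialize (HT0 Et). nra.
      - eapply Rle_trans; [apply HT; lra|]. apply Rmult_le_compat_l; auto.
        apply Rle_Rpower_l; lra. }
    assert (Cs * s <= Cs * (D * Rpower d rho)) by (apply Rmult_le_compat_l; lra).
    nra.
Qed.

Lemma abs01 u v : 0 <= u <= 1 -> 0 <= v <= 1 -> Rabs (u - v) <= 1.
Proof. intros. apply Rabs_le; lra. Qed.

Lemma rho_lt a b : 0 < a -> a < b -> b < 1 -> 0 < ln b / ln a < 1.
Proof.
  intros H1 H2 H3. pose proof (ln_neg a ltac:(lra)). pose proof (ln_neg b ltac:(lra)).
  assert (ln a < ln b) by (apply ln_increasing; lra).
  replace (ln b / ln a) with ((- ln b) / (- ln a)) by (field; lra). split.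
  - apply Rdiv_lt_0_compat; lra.
  - apply Rlt_div_l; lra.
Qed.

Theorem proposition3p3 (a b : R) (g : R -> R -> R)
  (ha : 0 < a < 1/2) (hb : 0 < b < 1/2) (hg1 : Cb1 g) :
  (* well defined: the series converges on A *)
  (forall p, Aset a b p -> let '(x, y, _, _) := p in ex_series (hterm a b g x y)) /\
  (* injective on A *)
  (forall p q, Aset a b p -> Aset a b q -> hg a b g p = hg a b g q -> p = q) /\
  (* h_g(A) = A_g, for every delta > 0, with ||g||_oo the sup norm of g on M *)
  (forall delta gnorm, 0 < delta -> bounded_by g gnorm ->
     (forall K, bounded_by g K -> gnorm <= K) ->
     (forall q, Ag a b g delta gnorm q <-> exists p, Aset a b p /\ hg a b g p = q) /\
     (* the inverse is given by the formula *)
     (forall q, Ag a b g delta gnorm q ->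
        Aset a b (hg_inv a b g q) /\ hg a b g (hg_inv a b g q) = q)) /\
  (forall p, Aset a b p -> hg_inv a b g (hg a b g p) = p) /\
  (* conjugacy *)
  (forall v, Aset a b v -> B0 a b v = hg_inv a b g (Bg a b g (hg a b g v))) /\
  (* (i) *)
  (b < a -> BiLipschitz_on (Aset a b) (hg a b g)) /\
  (* (ii) *)
  (a = b -> forall rho, 0 < rho < 1 ->
     Holder_on (Aset a b) (hg a b g) rho /\
     (forall delta gnorm, 0 < delta -> bounded_by g gnorm ->
        (forall K, bounded_by g K -> gnorm <= K) ->
        Holder_on (Ag a b g delta gnorm) (hg_inv a b g) rho)) /\
  (* (iii) *)
  (a < b -> Holder_on (Aset a b) (hg a b g) (ln b / ln a)).
Proof.
  pose proof hg1 as hg1'. destruct hg1' as [[K HK] _].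
  destruct (Cb1_lip g hg1) as [L [HL Hlip]].
  pose proof (bounded_nonneg g K HK) as HK0.
  pose proof (Mc_pos a K L ha HK0 HL) as HM.
  set (M := Mc a K L) in *.
  assert (SD : forall x y x' y', 0 <= x < 1 -> Cantor a y -> 0 <= x' < 1 -> Cantor a y' ->
     Rabs (Series (hterm a b g x y) - Series (hterm a b g x' y')) <=
     M * Rabs (x - x') / (1 - b) + Tser a b K L (Rabs (y - y'))).
  { intros x y x' y' Hx Hy Hx' Hy'.
    exact (S_diff a b g K L ha hb HK HL Hlip x y x' y' (conj Hx Hy) (conj Hx' Hy')). }
  assert (Hhg : forall x y z w, hg a b g (x, y, z, w) = (x, y, z, w + Series (hterm a b g x y)))
    by reflexivity.
  assert (Hhgi : forall x y z w, hg_inv a b g (x, y, z, w) = (x, y, z, w + - Series (hterm a b g x y)))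
    by reflexivity.
  split.
  { intros [[[x y] z] w] [Hx _]. exact (ex_hterm a b g K x y ltac:(lra) HK Hx). }
  split.
  { intros [[[x y] z] w] [[[x' y'] z'] w'] _ _ E. rewrite !Hhg in E.
    injection E; intros. subst. f_equal. lra. }
  split.
  { intros delta gn Hd Hgn _. split.
    - intro q; split.
      + intro Hq; exists (hg_inv a b g q); split; [apply (C2 a b g delta gn); auto|apply hg_hginv].
      + intros [p [Hp <-]]. apply C1; auto.
    - intros q Hq; split; [apply (C2 a b g delta gn); auto|apply hg_hginv]. }
  split; [intros p _; apply hginv_hg|].
  split; [intros v Hv; apply (conj_eq a b g K); auto|].
  split.
  {
    intros Hba.
    set (C1' := M / (1 - b) + M / (a - b)).
    assert (HC1 : 0 <= C1') by (unfold C1'; apply Rplus_le_le_0_compat; apply Rdiv_le_0_compat; lra).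
    exists (1 + 2 * C1'). split; [lra|].
    intros [[[x y] z] w] [[[x' y'] z'] w'] [Hx [Hy [Hz Hw]]] [Hx' [Hy' [Hz' Hw']]].
    rewrite !Hhg.
    set (S1 := Series (hterm a b g x y)). set (S2 := Series (hterm a b g x' y')).
    set (s := Rabs (x - x')). set (t := Rabs (y - y')).
    assert (Hs : 0 <= s) by apply Rabs_pos. assert (Ht : 0 <= t) by apply Rabs_pos.
    assert (HS : Rabs (S1 - S2) <= C1' * (s + t)).
    { eapply Rle_trans; [apply SD; auto|]. fold s t.
      pose proof (Tser_lin a b K L ha hb HK0 HL t Hba Ht). fold M in H.
      unfold C1'. replace (M * s / (1 - b)) with (M / (1 - b) * s) by (field; lra).
      replace (M * t / (a - b)) with (M / (a - b) * t) in H by (field; lra).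
      assert (0 <= M / (1 - b) * t) by (apply Rmult_le_pos; [apply Rdiv_le_0_compat|]; lra).
      assert (0 <= M / (a - b) * s) by (apply Rmult_le_pos; [apply Rdiv_le_0_compat|]; lra).
      lra. }
    set (d := dist4 (x, y, z, w) (x', y', z', w')).
    set (dh := dist4 (x, y, z, w + S1) (x', y', z', w' + S2)).
    assert (E1 : dh <= d + Rabs (S1 - S2)) by apply dist_shift.
    assert (E2 : d <= dh + Rabs (S1 - S2)) by apply dist_shift_inv.
    assert (s <= d) by apply dist_x. assert (t <= d) by apply dist_y.
    assert (s <= dh) by apply dist_x. assert (t <= dh) by apply dist_y.
    split.
    - apply Rle_div_l; [lra|]. assert (C1' * (s + t) <= C1' * (2 * dh)) by (apply Rmult_le_compat_l; lra). nra.
    - assert (C1' * (s + t) <= C1' * (2 * d)) by (apply Rmult_le_compat_l; lra). nra. }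
  split.
  {
    intros Hab rho Hrho.
    destruct (Tser_eq a b K L ha hb HK0 HL rho Hab Hrho) as [C [HC HT]].
    assert (HCs : 0 <= M / (1 - b)) by (apply Rdiv_le_0_compat; lra).
    split.
    - exists (4 * (1 + M / (1 - b)) + C). split; [nra|].
      intros [[[x y] z] w] [[[x' y'] z'] w'] [Hx [Hy [Hz Hw]]] [Hx' [Hy' [Hz' Hw']]].
      rewrite !Hhg.
      pose proof (cantor_bound a y ltac:(lra) Hy). pose proof (cantor_bound a y' ltac:(lra) Hy').
      pose proof (cantor_bound b w ltac:(lra) Hw). pose proof (cantor_bound b w' ltac:(lra) Hw').
      apply (holder_core rho 4 C (M / (1 - b)) _ (Rabs (x - x')) (Rabs (y - y')) _ (Tser a b K L (Rabs (y - y'))));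
        auto; try lra.
      + split; [apply dist_nonneg|]. eapply Rle_trans; [apply dist_le_sum|].
        pose proof (abs01 x x' ltac:(lra) ltac:(lra)). pose proof (abs01 y y' ltac:(lra) ltac:(lra)).
        pose proof (abs01 z z' ltac:(lra) ltac:(lra)). pose proof (abs01 w w' ltac:(lra) ltac:(lra)). lra.
      + split; [apply Rabs_pos|apply dist_x].
      + split; [apply Rabs_pos|apply dist_y].
      + eapply Rle_trans; [apply dist_shift|]. rewrite Rplus_assoc. apply Rplus_le_compat_l.
        eapply Rle_trans; [apply SD; auto|]. right; field; lra.
      + intros E; rewrite E. apply Tser0; auto.
    - intros delta gn Hd Hgn _.
      pose proof (C_pos b g gn hb Hgn) as HCg.
      set (D := 4 + 2 * delta + 2 * (gn / (1 - b))).
      exists (D * (1 + M / (1 - b)) + C). split.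
      { apply Rplus_le_le_0_compat; auto. apply Rmult_le_pos; unfold D; lra. }
      intros q q' Hq Hq'.
      pose proof (C2 a b g delta gn ha hb Hd Hgn q Hq) as Aq.
      pose proof (C2 a b g delta gn ha hb Hd Hgn q' Hq') as Aq'.
      assert (Vq : Vset b delta gn q) by (destruct (Hq O) as [p0 [H0 E]]; simpl in E; subst; auto).
      assert (Vq' : Vset b delta gn q') by (destruct (Hq' O) as [p0 [H0 E]]; simpl in E; subst; auto).
      destruct q as [[[x y] z] w]. destruct q' as [[[x' y'] z'] w'].
      rewrite !Hhgi in *. destruct Aq as [Hx [Hy _]]. destruct Aq' as [Hx' [Hy' _]].
      destruct Vq as (_ & _ & Hz & Hw). destruct Vq' as (_ & _ & Hz' & Hw').
      pose proof (cantor_bound a y ltac:(lra) Hy). pose proof (cantor_bound a y' ltac:(lra) Hy').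
      apply (holder_core rho D C (M / (1 - b)) _ (Rabs (x - x')) (Rabs (y - y')) _ (Tser a b K L (Rabs (y - y'))));
        auto; try (unfold D; lra).
      + split; [apply dist_nonneg|]. eapply Rle_trans; [apply dist_le_sum|].
        pose proof (abs01 x x' ltac:(lra) ltac:(lra)). pose proof (abs01 y y' ltac:(lra) ltac:(lra)).
        pose proof (abs01 z z' ltac:(lra) ltac:(lra)).
        assert (Rabs (w - w') <= 1 + 2 * delta + 2 * (gn / (1 - b))) by (apply Rabs_le; lra).
        unfold D; lra.
      + split; [apply Rabs_pos|apply dist_x].
      + split; [apply Rabs_pos|apply dist_y].
      + eapply Rle_trans; [apply dist_shift|]. rewrite Rplus_assoc. apply Rplus_le_compat_l.
        replace (- Series (hterm a b g x y) - - Series (hterm a b g x' y'))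
          with (- (Series (hterm a b g x y) - Series (hterm a b g x' y'))) by ring.
        rewrite Rabs_Ropp.
        eapply Rle_trans; [apply SD; auto|]. right; field; lra.
      + intros E; rewrite E. apply Tser0; auto. }
  {
    intros Hab.
    pose proof (rho_lt a b ltac:(lra) Hab ltac:(lra)) as Hrho.
    destruct (Tser_lt a b K L ha hb HK0 HL Hab) as [C [HC HT]].
    assert (HCs : 0 <= M / (1 - b)) by (apply Rdiv_le_0_compat; lra).
    exists (4 * (1 + M / (1 - b)) + C). split; [nra|].
    intros [[[x y] z] w] [[[x' y'] z'] w'] [Hx [Hy [Hz Hw]]] [Hx' [Hy' [Hz' Hw']]].
    rewrite !Hhg.
    pose proof (cantor_bound a y ltac:(lra) Hy). pose proof (cantor_bound a y' ltac:(lra) Hy').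
    pose proof (cantor_bound b w ltac:(lra) Hw). pose proof (cantor_bound b w' ltac:(lra) Hw').
    pose proof (abs01 y y' ltac:(lra) ltac:(lra)).
    apply (holder_core _ 4 C (M / (1 - b)) _ (Rabs (x - x')) (Rabs (y - y')) _ (Tser a b K L (Rabs (y - y'))));
      auto; try lra.
    + split; [apply dist_nonneg|]. eapply Rle_trans; [apply dist_le_sum|].
      pose proof (abs01 x x' ltac:(lra) ltac:(lra)).
      pose proof (abs01 z z' ltac:(lra) ltac:(lra)). pose proof (abs01 w w' ltac:(lra) ltac:(lra)). lra.
    + split; [apply Rabs_pos|apply dist_x].
    + split; [apply Rabs_pos|apply dist_y].
    + eapply Rle_trans; [apply dist_shift|]. rewrite Rplus_assoc. apply Rplus_le_compat_l.
      eapply Rle_trans; [apply SD; auto|]. right; field; lra.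
    + intros E; rewrite E. apply Tser0; auto. }
Qed.
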